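(* Fix real numbers $\lambda>0$, $u$, $V$, $\alpha$. Let $c_1=-1$, $c_2=0$, $c_3=1$ and let $P_1=1$, $P_2=\lambda X$, $P_3=\lambda^2(3X^2-2)$. Let $\widehat P_1=1$ and let $\widehat P_2,\widehat P_3$ be real polynomials of degree at most $2$ such that the matrix $\widehat M=(\widehat P_k(c_j))_{1\le k,j\le 3}$ is invertible. Let $C$ be the (invertible) $3\times 3$ matrix with $\widehat M = CM$, where $M=(P_k(c_j))_{1\le k,j\le 3}$ (so the first row of $C$ is $(1,0,0)$). Let $T$ (resp. $\widehat T$) be the $3\times 3$ matrix defined by $P_k(c_j-u)=\sum_{l=1}^3 T_{k,l}P_l(c_j)$ (resp. $\widehat P_k(c_j-u)=\sum_{l=1}^3 \widehat T_{k,l}\widehat P_l(c_j)$) for all $1\le k,j\le 3$. Let $$E=\begin{pmatrix}1&0&0\\ V\lambda&0&0\\ \alpha\lambda^2&0&0\end{pmatrix},\qquad \widehat E = CE,$$ and for real $s,s'$ let $S=\widehat S=\mathrm{diag}(0,s,s')$. Define $$R=M^{-1}T^{-1}\bigl(I+S(TET^{-1}-I)\bigr)TM,\qquad \widehat R=\widehat M^{-1}\widehat T^{-1}\bigl(I+\widehat S(\widehat T\widehat E\widehat T^{-1}-I)\bigr)\widehat T\widehat M,$$ where $I$ is the $3\times3$ identity. Then $\widehat R=R$ for all $(s,s')\in\mathbb{R}^2$ if and only if $\widehat P_2\in\operatorname{span}(P_1,P_2)$ and $\widehat P_3\in\operatorname{span}(P_1,P_3)$ in $\mathbb{R}[X]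/\bigl(X(X-1)(X+1)\bigr)$.
   Context: This concerns the D1Q3 lattice Boltzmann scheme with relative velocity $u$: the moments of the distribution vector $F=(f_1,f_2,f_3)^T$ are $\sum_j P_k(c_j-u)f_j$, $k=1,2,3$; $M$ maps $F$ to the moments with $u=0$ and $T$ is the change of basis to the moments with relative velocity $u$; $E$ encodes the equilibrium values $\rho^{eq}=\rho$, $q^{eq}(0)=\lambda V\rho$, $\varepsilon^{eq}(0)=\lambda^2\alpha\rho$; $S$ contains the relaxation parameters; and $R$ is the matrix of the relaxation step $F^\star=RF$. The hatted objects describe the same scheme built from another choice of moment polynomials $(\widehat P_1,\widehat P_2,\widehat P_3)$ with the same first moment, the same equilibrium distributions and the same relaxation parameters. *)

(* Defs.v *)
From HB Require Import structures.
From mathcomp Require Import all_boot all_order all_algebra.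
From mathcomp Require Import reals.
Set Implicit Arguments. Unset Strict Implicit. Unset Printing Implicit Defensive.
Import Order.TTheory GRing.Theory Num.Theory.
Local Open Scope ring_scope.

Section D1Q3.
Variable R : realType.

(* velocities c_1 = -1, c_2 = 0, c_3 = 1, indexed by j : 'I_3 (j = 0,1,2) *)
Definition cpt (j : 'I_3) : R := j%:R - 1.

Definition pol1 : {poly R} := 1.
Definition pol2 (lam : R) : {poly R} := lam *: 'X.
Definition pol3 (lam : R) : {poly R} := lam ^+ 2 *: (3%:P * 'X ^+ 2 - 2%:P).

Definition Pstd (lam : R) (k : 'I_3) : {poly R} :=
  match val k with 0%N => pol1 | 1%N => pol2 lam | _ => pol3 lam end.

Definition Phat (P2 P3 : {poly R}) (k : 'I_3) : {poly R} :=
  match val k with 0%N => 1 | 1%N => P2 | _ => P3 end.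

(* (P_k(c_j - u))_{k,j} ; with u = 0 this is the moment matrix M *)
Definition momat (P : 'I_3 -> {poly R}) (u : R) : 'M[R]_3 :=
  \matrix_(k, j) (P k).[cpt j - u].

(* T is the unique matrix with P_k(c_j - u) = sum_l T_{k,l} P_l(c_j),
   i.e. momat P u = T *m momat P 0 (momat P 0 invertible) *)
Definition shiftmx (P : 'I_3 -> {poly R}) (u : R) : 'M[R]_3 :=
  momat P u *m invmx (momat P 0).

Definition Emat (lam V alpha : R) : 'M[R]_3 :=
  \matrix_(i, j) if val j == 0%N then nth 0 [:: 1; V * lam; alpha * lam ^+ 2] i
                 else 0.

Definition Smat (s s' : R) : 'M[R]_3 := diag_mx (\row_i nth 0 [:: 0; s; s'] i).

Definition Cmat (lam : R) (P2 P3 : {poly R}) : 'M[R]_3 :=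
  momat (Phat P2 P3) 0 *m invmx (momat (Pstd lam) 0).

Definition relaxmx (P : 'I_3 -> {poly R}) (u : R) (E : 'M[R]_3) (s s' : R)
  : 'M[R]_3 :=
  let M := momat P 0 in
  let T := shiftmx P u in
  invmx M *m invmx T *m (1%:M + Smat s s' *m (T *m E *m invmx T - 1%:M))
    *m T *m M.

Definition modpoly3 : {poly R} := 'X * ('X - 1) * ('X + 1).

End D1Q3.

(* Main.v *)
Require Import Defs.
From HB Require Import structures.
From mathcomp Require Import all_boot all_order all_algebra.
From mathcomp Require Import reals.
From mathcomp Require Import ring lra.
Import Order.TTheory GRing.Theory Num.Theory.
Local Open Scope ring_scope.

Section H.
Variable R : realType.

Lemma invmx_uniq (A B : 'M[R]_3) : A *m B = 1%:M -> invmx A = B.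
Proof.
move=> H; have uA := (mulmx1_unit H).1.
by rewrite -[invmx A]mulmx1 -H mulmxA mulVmx // mul1mx.
Qed.

Lemma vanish3 (Q : {poly R}) : (size Q <= 3)%N ->
  (forall j : 'I_3, Q.[cpt R j] = 0) -> Q = 0.
Proof.
move=> sQ HQ; apply/eqP; apply/negPn/negP => Qn0.
have := max_poly_roots Qn0 (rs := [:: cpt R 0; cpt R 1; cpt R 2]).
rewrite /= !rootE !HQ /= !inE /cpt !eqxx => /(_ isT).
rewrite !(inj_eq (addIr _)) !eqr_nat /= => /(_ isT).
by rewrite ltnNge sQ.
Qed.


Definition o0 : 'I_3 := @Ordinal 3 0 isT.
Definition o1 : 'I_3 := @Ordinal 3 1 isT.
Definition o2 : 'I_3 := @Ordinal 3 2 isT.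

Definition mk3 (l : seq (seq R)) : 'M[R]_3 := \matrix_(i, j) nth 0 (nth [::] l i) j.
Definition mkc3 (l : seq R) : 'cV[R]_3 := \matrix_(i, j) nth 0 l i.

Lemma ord3P (P : 'I_3 -> Prop) : P o0 -> P o1 -> P o2 -> forall i, P i.
Proof.
move=> h0 h1 h2 [[|[|[|i]]] Hi] //.
- by have -> : Ordinal Hi = o0 by apply/val_inj.
- by have -> : Ordinal Hi = o1 by apply/val_inj.
- by have -> : Ordinal Hi = o2 by apply/val_inj.
Qed.

Lemma mk3E (A : 'M[R]_3) : A = mk3 [:: [:: A o0 o0; A o0 o1; A o0 o2];
  [:: A o1 o0; A o1 o1; A o1 o2]; [:: A o2 o0; A o2 o1; A o2 o2]].
Proof.
apply/matrixP; apply: ord3P; apply: ord3P; by rewrite mxE.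
Qed.

Lemma mkc3E (A : 'cV[R]_3) : A = mkc3 [:: A o0 0; A o1 0; A o2 0].
Proof.
apply/matrixP => i j; rewrite (ord1 j); move: i; apply: ord3P; by rewrite mxE.
Qed.

Definition r0 : 'rV[R]_3 := \row_j (j == ord0)%:R.

Definition Zm (H : 'M[R]_3) (y : 'cV[R]_3) s s' :=
  1%:M + Smat s s' *m (H *m y *m r0 - 1%:M).

Lemma lift01 : lift ord0 (ord0 : 'I_2) = o1. Proof. exact/val_inj. Qed.
Lemma lift012 : lift ord0 (lift ord0 (ord0 : 'I_1)) = o2. Proof. exact/val_inj. Qed.
Lemma ord0_3 : (ord0 : 'I_3) = o0. Proof. exact/val_inj. Qed.

Lemma mul3E (A B : 'M[R]_3) i j : (A *m B) i j = A i o0 * B o0 j + A i o1 * B o1 j + A i o2 * B o2 j.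
Proof. by rewrite mxE !big_ord_recl big_ord0 /= lift01 lift012 ord0_3 addr0 addrA. Qed.
Lemma mul31E (A : 'cV[R]_3) (B : 'rV[R]_3) i j : (A *m B) i j = A i ord0 * B ord0 j.
Proof. by rewrite mxE big_ord1. Qed.
Lemma mul3cE (A : 'M[R]_3) (B : 'cV[R]_3) i j : (A *m B) i j = A i o0 * B o0 j + A i o1 * B o1 j + A i o2 * B o2 j.
Proof. by rewrite mxE !big_ord_recl big_ord0 /= lift01 lift012 ord0_3 addr0 addrA. Qed.

Ltac ex3 := rewrite ?(mxE, big_ord_recl, big_ord0) /= ?lift01 ?lift012 ?ord0_3
  ?(mulr0n, mulr1n, mul0r, mulr0, add0r, addr0, mul1r, mulr1, subr0, sub0r, subrr, oppr0).

Definition sv (s s' : R) (i : 'I_3) : R := nth 0 [:: 0; s; s'] i.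

Lemma ZmE H y s s' i j : Zm H y s s' i j =
  (i == j)%:R + sv s s' i * ((H *m y) i ord0 * (j == ord0)%:R - (i == j)%:R).
Proof.
rewrite /Zm /Smat mul_diag_mx !mxE big_ord1 !mxE /sv.
by [].
Qed.

Lemma key (G : 'M[R]_3) (y : 'cV[R]_3) :
  G o0 o0 = 1 -> G o0 o1 = 0 -> G o0 o2 = 0 -> y o0 ord0 = 1 ->
  (forall s s', Zm G y s s' *m G = G *m Zm 1%:M y s s') <->
  (G o1 o2 = 0 /\ G o2 o1 = 0).
Proof.
move=> g00 g01 g02 y0.
split.
- move=> /(_ 0 1) H.
  have h12 := congr1 (fun A : 'M[R]_3 => A o1 o2) H.
  have h21 := congr1 (fun A : 'M[R]_3 => A o2 o1) H.
  move: h12 h21; rewrite !mul3E !ZmE mul1mx !mul3cE /sv ?ord0_3 ?(g00, g01, g02, y0) /o0 /o1 /o2 /=.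
  rewrite ?(mulr0n, mulr1n, mul0r, mulr0, add0r, addr0, mul1r, mulr1, subr0, sub0r, subrr, oppr0).
  by move=> h12 h21; split; [exact: h12 | exact: esym h21].
case=> g12 g21 s s'.
apply/matrixP; apply: ord3P; apply: ord3P.
all: rewrite !mul3E !ZmE mul1mx !mul3cE /sv ?ord0_3 ?(g00, g01, g02, g12, g21, y0) /o0 /o1 /o2 /=.
all: ring.
Qed.

Lemma r0E n (X : 'M[R]_(3, n)) j : (r0 *m X) ord0 j = X o0 j.
Proof. by rewrite mxE !big_ord_recl big_ord0 /r0 !mxE /= ?lift01 ?lift012 ?ord0_3 /=; ring. Qed.

Lemma r0_momat (P : 'I_3 -> {poly R}) u : P o0 = 1 -> r0 *m momat P u = const_mx 1.
Proof. by move=> h; apply/matrixP => i j; rewrite (ord1 i) r0E !mxE h hornerC. Qed.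

Lemma sz3D (p q : {poly R}) : (size p <= 3)%N -> (size q <= 3)%N -> (size (p + q)%R <= 3)%N.
Proof. by move=> hp hq; apply: leq_trans (size_polyD _ _) _; rewrite geq_max hp hq. Qed.
Lemma sz3N (p : {poly R}) : (size p <= 3)%N -> (size (- p)%R <= 3)%N.
Proof. by rewrite size_polyN. Qed.
Lemma sz3Z a (p : {poly R}) : (size p <= 3)%N -> (size (a *: p)%R <= 3)%N.
Proof. by move=> h; apply: leq_trans (size_scale_leq _ _) h. Qed.

Lemma sz_std (lam : R) k : (size (Pstd lam k) <= 3)%N.
Proof.
move: k; apply: ord3P; rewrite /Pstd /=.
- by rewrite /pol1 size_poly1.
- by apply: sz3Z; rewrite size_polyX.
- apply: sz3Z; apply: sz3D; first by rewrite mul_polyC; apply: sz3Z; rewrite size_polyXn.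
  by apply: sz3N; rewrite size_polyC; case: (_ != 0).
Qed.

Lemma sz_hat (P2 P3 : {poly R}) k : (size P2 <= 3)%N -> (size P3 <= 3)%N -> (size (Phat P2 P3 k) <= 3)%N.
Proof.
move=> h2 h3; move: k; apply: ord3P; rewrite /Phat //=.
by rewrite size_poly1.
Qed.

Lemma conj_eq (X A B : 'M[R]_3) : X \in unitmx ->
  (invmx X *m A *m X = invmx X *m B *m X) <-> A = B.
Proof.
move=> uX; split=> [h|->//].
have := congr1 (fun C => X *m C *m invmx X) h.
by rewrite !mulmxA !mulmxV // !mul1mx !mulmxK.
Qed.

Lemma relaxE (P : 'I_3 -> {poly R}) u E s s' :
  momat P 0 \in unitmx -> momat P u \in unitmx ->
  relaxmx P u E s s' = invmx (momat P u) *m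
    (1%:M + Smat s s' *m (momat P u *m invmx (momat P 0) *m E *m momat P 0 *m invmx (momat P u) - 1%:M))
    *m momat P u.
Proof.
move=> uM uMu; rewrite /relaxmx /shiftmx.
have -> : invmx (momat P u *m invmx (momat P 0)) = momat P 0 *m invmx (momat P u).
  apply: invmx_uniq.
  by rewrite !mulmxA mulmxKV // mulmxV.
by rewrite !mulmxA mulVmx // mul1mx mulmxKV.
Qed.


Ltac simp3 := cbn -[GRing.mul GRing.add GRing.opp GRing.inv GRing.natmul GRing.exp GRing.zero GRing.one horner].

Lemma horner1' (x : R) : (1 : {poly R}).[x] = 1.
Proof. by rewrite -polyC1 hornerC. Qed.
Ltac hornE := rewrite ?(hornerD, hornerN, hornerX, hornerC, horner_exp, hornerCM, hornerZ, hornerM, horner1').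

Lemma momatE (P : 'I_3 -> {poly R}) u k j : momat P u k j = (P k).[cpt R j - u].
Proof. by rewrite mxE. Qed.

Section Std.
Variable lam : R.
Hypothesis hlam : lam != 0.

Definition Minv : 'M[R]_3 := mk3 [:: [:: 1/3; - 1/(2*lam); 1/(6*lam^+2)];
  [:: 1/3; 0; - 1/(3*lam^+2)]; [:: 1/3; 1/(2*lam); 1/(6*lam^+2)]].

Lemma M_unit : momat (Pstd lam) 0 \in unitmx.
Proof.
have h : momat (Pstd lam) 0 *m Minv = 1%:M.
  apply/matrixP; apply: ord3P; apply: ord3P;
  rewrite mul3E !momatE /Minv !mxE /o0 /o1 /o2 /Pstd /cpt; simp3; rewrite /pol1 /pol2 /pol3; hornE;
  field; rewrite ?hlam //.
exact: (mulmx1_unit h).1.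
Qed.

Definition Amx (u : R) : 'M[R]_3 := mk3 [:: [:: 1; 0; 0];
  [:: - (lam * u); 1; 0]; [:: 3 * u^+2 * lam^+2; - (6 * u * lam); 1]].

Lemma Mu_eq u : momat (Pstd lam) u = Amx u *m momat (Pstd lam) 0.
Proof.
apply/matrixP; apply: ord3P; apply: ord3P;
  rewrite mul3E !momatE /Amx !mxE /o0 /o1 /o2 /Pstd /cpt; simp3; rewrite /pol1 /pol2 /pol3; hornE; ring.
Qed.

Lemma Mu_unit u : momat (Pstd lam) u \in unitmx.
Proof.
rewrite Mu_eq unitmx_mul M_unit andbT.
have h : Amx u *m Amx (- u) = 1%:M.
  by apply/matrixP; apply: ord3P; apply: ord3P; rewrite mul3E /Amx !mxE /o0 /o1 /o2; simp3; ring.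
exact: (mulmx1_unit h).1.
Qed.
End Std.


Section Main.
Variables (lam u V alpha : R) (P2 P3 : {poly R}).
Hypotheses (hlam : lam != 0) (s2 : (size P2 <= 3)%N) (s3 : (size P3 <= 3)%N)
  (uMh : momat (Phat P2 P3) 0 \in unitmx).

Local Notation M := (momat (Pstd lam) 0).
Local Notation Mu := (momat (Pstd lam) u).
Local Notation Mh := (momat (Phat P2 P3) 0).
Local Notation Muh := (momat (Phat P2 P3) u).
Local Notation G := (Mh *m invmx M).
Definition vE : 'cV[R]_3 := \col_i nth 0 [:: 1; V * lam; alpha * lam ^+ 2] i.
Local Notation y := (Mu *m (invmx M *m vE)).

Lemma uM : M \in unitmx. Proof. exact: M_unit. Qed.
Lemma uMu : Mu \in unitmx. Proof. exact: Mu_unit. Qed.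
Lemma uG : G \in unitmx. Proof. by rewrite unitmx_mul uMh unitmx_inv uM. Qed.

Lemma r0M : r0 *m M = const_mx 1. Proof. exact: r0_momat. Qed.
Lemma r0Mu : r0 *m Mu = const_mx 1. Proof. exact: r0_momat. Qed.
Lemma r0Mh : r0 *m Mh = const_mx 1. Proof. exact: r0_momat. Qed.
Lemma r0Muh : r0 *m Muh = const_mx 1. Proof. exact: r0_momat. Qed.

Lemma r0G : r0 *m G = r0.
Proof. by rewrite mulmxA r0Mh -r0M mulmxK // uM. Qed.

Lemma G0j j : G o0 j = (j == ord0)%:R.
Proof. by rewrite -r0E r0G mxE. Qed.

Lemma MhG : Mh = G *m M.
Proof. by rewrite mulmxKV // uM. Qed.

Lemma MuhG : Muh = G *m Mu.
Proof.
apply/matrixP => k j.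
set Q := Phat P2 P3 k - (G k o0 *: Pstd lam o0 + G k o1 *: Pstd lam o1 + G k o2 *: Pstd lam o2).
have sQ : (size Q <= 3)%N.
  apply: sz3D; first exact: sz_hat.
  by apply: sz3N; do 2?apply: sz3D; apply: sz3Z; apply: sz_std.
have HQ : forall j : 'I_3, Q.[cpt R j] = 0.
  move=> j'; have e := congr1 (fun A : 'M[R]_3 => A k j') MhG.
  rewrite /= mul3E !momatE !subr0 in e.
  by rewrite /Q hornerD hornerN !hornerD ![(_ *: Pstd _ _).[_]]hornerZ e subrr.
have Q0 := vanish3 Q sQ HQ.
have := congr1 (fun p => p.[cpt R j - u]) Q0.
rewrite /Q hornerD hornerN !hornerD ![(_ *: Pstd _ _).[_]]hornerZ horner0 => /eqP; rewrite subr_eq0 => /eqP e.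
by rewrite mul3E !momatE e.
Qed.

Lemma uMuh : Muh \in unitmx.
Proof. by rewrite MuhG unitmx_mul uG uMu. Qed.

Lemma y0 : y o0 ord0 = 1.
Proof.
rewrite -r0E mulmxA r0Mu -r0M -mulmxA [M *m _]mulmxA mulmxV ?uM // mul1mx r0E.
by rewrite mxE.
Qed.

Lemma Evr : Emat lam V alpha = vE *m r0.
Proof.
apply/matrixP => i j; rewrite mul31E /vE /r0 !mxE.
by move: j; apply: ord3P; rewrite /o0 /o1 /o2 /=; rewrite ?mulr0 ?mulr1.
Qed.

Lemma relax_std s s' :
  relaxmx (Pstd lam) u (Emat lam V alpha) s s' = invmx Mu *m Zm 1%:M y s s' *m Mu.
Proof.
rewrite relaxE ?uM ?uMu // /Zm Evr.
have inner : Mu *m invmx M *m (vE *m r0) *m M *m invmx Mu = 1%:M *m y *m r0.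
  transitivity (Mu *m invmx M *m vE *m (r0 *m M) *m invmx Mu); first by rewrite !mulmxA.
  by rewrite r0M -r0Mu !mulmxA mulmxK ?uMu // mul1mx.
by rewrite inner.
Qed.

Lemma relax_hat s s' :
  relaxmx (Phat P2 P3) u (Cmat lam P2 P3 *m Emat lam V alpha) s s' =
  invmx Mu *m (invmx G *m Zm G y s s' *m G) *m Mu.
Proof.
rewrite relaxE ?uMh ?uMuh // /Zm Evr /Cmat.
have inner : Muh *m invmx Mh *m (Mh *m invmx M *m (vE *m r0)) *m Mh *m invmx Muh
   = G *m y *m r0.
  transitivity (Muh *m invmx M *m vE *m (r0 *m Mh) *m invmx Muh).
    by rewrite !mulmxA mulmxKV // uMh.
  rewrite r0Mh -r0Muh !mulmxA mulmxK ?uMuh //.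
  by rewrite MuhG.
rewrite inner.
have -> : invmx Muh = invmx Mu *m invmx G.
  by apply: invmx_uniq; rewrite MuhG !mulmxA mulmxK ?uMu // mulmxV // uG.
by rewrite MuhG !mulmxA.
Qed.

Lemma relax_iff :
  (forall s s' : R,
     relaxmx (Phat P2 P3) u (Cmat lam P2 P3 *m Emat lam V alpha) s s'
     = relaxmx (Pstd lam) u (Emat lam V alpha) s s')
  <-> (G o1 o2 = 0 /\ G o2 o1 = 0).
Proof.
rewrite -(@key G y); last exact: y0.
- split=> h s s'; have := h s s'; rewrite relax_hat relax_std.
  + move/(conj_eq _ _ _ uMu) => e.
    by rewrite -e !mulmxA mulmxV ?uG // mul1mx.
  + move=> e; apply/(conj_eq _ _ _ uMu).
    by rewrite -mulmxA e mulmxA mulVmx ?uG // mul1mx.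
- by rewrite G0j.
- by rewrite G0j.
- by rewrite G0j.

Qed.
Lemma Phat0 : Phat P2 P3 o0 = 1. Proof. by []. Qed.
Lemma Phat1 : Phat P2 P3 o1 = P2. Proof. by []. Qed.
Lemma Phat2 : Phat P2 P3 o2 = P3. Proof. by []. Qed.
Lemma Pstd0 : Pstd lam o0 = pol1 R. Proof. by []. Qed.
Lemma Pstd1 : Pstd lam o1 = pol2 lam. Proof. by []. Qed.
Lemma Pstd2 : Pstd lam o2 = pol3 lam. Proof. by []. Qed.

Lemma m3root j : (modpoly3 R).[cpt R j] = 0.
Proof.
rewrite /modpoly3 !hornerM !hornerD hornerN hornerX hornerC /cpt.
move: j; apply: ord3P; rewrite /o0 /o1 /o2; simp3; ring.

Qed.
Lemma poly_iff : (G o1 o2 = 0 /\ G o2 o1 = 0) <->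
  ((exists a b : R, dvdp (@modpoly3 R) (P2 - (a *: @pol1 R + b *: pol2 lam))) /\
   (exists a b : R, dvdp (@modpoly3 R) (P3 - (a *: @pol1 R + b *: pol3 lam)))).
Proof.
have sp1 : (size (pol1 R) <= 3)%N by exact: (sz_std lam o0).
have sp2 : (size (pol2 lam) <= 3)%N by exact: (sz_std lam o1).
have sp3 : (size (pol3 lam) <= 3)%N by exact: (sz_std lam o2).
split.
- case=> g12 g21; split.
  + exists (G o1 o0), (G o1 o1).
    suff -> : P2 - (G o1 o0 *: pol1 R + G o1 o1 *: pol2 lam) = 0 by rewrite dvdp0.
    apply: vanish3; first by apply: sz3D => //; apply: sz3N; apply: sz3D; apply: sz3Z.
    move=> j; have := congr1 (fun A : 'M[R]_3 => A o1 j) MhG.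
    rewrite /= mul3E !momatE !subr0 g12 mul0r addr0 Phat1 Pstd0 Pstd1 => e.
    by rewrite hornerD hornerN hornerD [(_ *: pol1 _).[_]]hornerZ [(_ *: pol2 _).[_]]hornerZ e subrr.
  + exists (G o2 o0), (G o2 o2).
    suff -> : P3 - (G o2 o0 *: pol1 R + G o2 o2 *: pol3 lam) = 0 by rewrite dvdp0.
    apply: vanish3; first by apply: sz3D => //; apply: sz3N; apply: sz3D; apply: sz3Z.
    move=> j; have := congr1 (fun A : 'M[R]_3 => A o2 j) MhG.
    rewrite /= mul3E !momatE !subr0 g21 mul0r addr0 Phat2 Pstd0 Pstd2 => e.
    by rewrite hornerD hornerN hornerD [(_ *: pol1 _).[_]]hornerZ [(_ *: pol3 _).[_]]hornerZ e subrr.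
- case=> [[a [b d2]] [a' [b' d3]]].
  have e2 j : P2.[cpt R j] = a * (pol1 R).[cpt R j] + b * (pol2 lam).[cpt R j].
    move: d2 => /dvdpP [r] /(congr1 (fun p => p.[cpt R j])).
    rewrite hornerM m3root mulr0 hornerD hornerN hornerD [(_ *: pol1 _).[_]]hornerZ [(_ *: pol2 _).[_]]hornerZ.
    by move/eqP; rewrite subr_eq0 => /eqP.
  have e3 j : P3.[cpt R j] = a' * (pol1 R).[cpt R j] + b' * (pol3 lam).[cpt R j].
    move: d3 => /dvdpP [r] /(congr1 (fun p => p.[cpt R j])).
    rewrite hornerM m3root mulr0 hornerD hornerN hornerD [(_ *: pol1 _).[_]]hornerZ [(_ *: pol3 _).[_]]hornerZ.
    by move/eqP; rewrite subr_eq0 => /eqP.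
  pose N := mk3 [:: [:: 1; 0; 0]; [:: a; b; 0]; [:: a'; 0; b']].
  have MhN : Mh = N *m M.
    apply/matrixP => k j; move: k; apply: ord3P; rewrite mul3E !momatE !subr0.
    + rewrite Phat0 Pstd0 Pstd1 Pstd2 /N !mxE /o0 /o1 /o2 /= /pol1; ring.
    + rewrite Phat1 Pstd0 Pstd1 Pstd2 e2 /N !mxE /o0 /o1 /o2 /=; ring.
    + rewrite Phat2 Pstd0 Pstd1 Pstd2 e3 /N !mxE /o0 /o1 /o2 /=; ring.
  rewrite MhN mulmxK ?uM // /N !mxE /o0 /o1 /o2 /=.
  by [].

Qed.
Lemma main_iff :
  (forall s s' : R,
     relaxmx (Phat P2 P3) u (Cmat lam P2 P3 *m Emat lam V alpha) s s'
     = relaxmx (Pstd lam) u (Emat lam V alpha) s s')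
  <->
  ((exists a b : R, dvdp (@modpoly3 R) (P2 - (a *: @pol1 R + b *: pol2 lam))) /\
   (exists a b : R, dvdp (@modpoly3 R) (P3 - (a *: @pol1 R + b *: pol3 lam)))).
Proof. exact: (iff_trans relax_iff poly_iff). Qed.

End Main.
End H.

Theorem proposition1 (R : realType) (lam u V alpha : R) (P2 P3 : {poly R}) :
  0 < lam ->
  (size P2 <= 3)%N -> (size P3 <= 3)%N ->
  momat (Phat P2 P3) 0 \in unitmx ->
  (forall s s' : R,
     relaxmx (Phat P2 P3) u (Cmat lam P2 P3 *m Emat lam V alpha) s s'
     = relaxmx (Pstd lam) u (Emat lam V alpha) s s')
  <->
  ((exists a b : R, dvdp (@modpoly3 R) (P2 - (a *: @pol1 R + b *: pol2 lam))) /\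
   (exists a b : R, dvdp (@modpoly3 R) (P3 - (a *: @pol1 R + b *: pol3 lam)))).
Proof.
move=> hl s2 s3 uMh.
exact: (@main_iff R lam u V alpha P2 P3 (lt0r_neq0 hl) s2 s3 uMh).
Qed.
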